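(* Let $S$ be the curve obtained from $\mathbb{P}^1$ by identifying the three points $0,1,\infty$ into a single (ordinary triple) point, and let $M_O$ be the moduli space of line bundles $L$ on $S$ whose pullback to $\mathbb{P}^1$ has degree $-1$. Identify $M_O$ with $(\mathbb{C}^* )^3/\mathbb{C}^*\subset\mathbb{P}^2=\bar M_O$, where (after fixing a trivialization over the triple point and viewing the pullback $\mathcal{O}(-1)$ as the tautological bundle) the three homogeneous coordinates record the gluing data of $L$ at the points $0,1,\infty$. Then the closure $Z\subset\bar M_O$ of the locus of those $L$ for which there exists a (unique) point $x$ with $L(x)\simeq\mathcal{O}_S$ is a quadric (conic) in $\mathbb{P}^2$ passing through the three coordinate points.
   Context: Here $L(x)$ denotes $L\otimes\mathcal{O}_S(x)$ for a smooth point $x$ of $S$. The identification $M_O\cong(\mathbb{C}^* )^3/\mathbb{C}^*$: a line bundle of degree $-1$ on $S$ is $\mathcal{O}_{\mathbb{P}^1}(-1)$ together with identifications of its fibers over $0,1,\infty$ with a common line; choosing these identifications amounts to choosing one nonzero vector on each of the three tautological lines over $0,1,\infty$, up to common scaling. *)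

(* Defs.v *)
From HB Require Import structures.
From mathcomp Require Import all_boot all_order all_algebra.
From mathcomp Require Import mpoly.
From mathcomp Require Import complex.
Set Implicit Arguments. Unset Strict Implicit. Unset Printing Implicit Defensive.
Import Order.TTheory GRing.Theory Num.Theory.
Local Open Scope ring_scope.

Section Model.
Variable F : fieldType.

(* A point of P^1 is given by a nonzero representative (x0, x1) in F^2,
   i.e. the point [x0 : x1]; the tautological line over it is F*(x0,x1). *)
Definition P1rep := (F * F)%type.
Definition is_P1rep (x : P1rep) : bool := (x.1 != 0) || (x.2 != 0).
Definition samept (x y : P1rep) : bool := x.1 * y.2 == x.2 * y.1.
Definition scl (k : F) (p : P1rep) : P1rep := (k * p.1, k * p.2).

(* the three special points 0 = [0:1], 1 = [1:1], oo = [1:0],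
   indexed by 'I_3 (0 -> 0, 1 -> 1, 2 -> oo), with fixed representatives *)
Definition special (i : 'I_3) : P1rep :=
  match val i with 0 => (0, 1) | 1 => (1, 1) | _ => (1, 0) end.

Definition smooth_pt (x : P1rep) : bool :=
  is_P1rep x && [forall i : 'I_3, ~~ samept x (special i)].

(* Gluing data of L in M_O: a nonzero vector v_i = a_i * special i on the
   tautological line over each special point (identified with 1 in the
   common line of the triple point). *)
Definition glue_ok (a : 'I_3 -> F) : Prop := forall i, a i != 0.

(* Global sections of O_{P^1}(-1)(x), x = [x0:x1]: the meromorphic sections
   of the tautological bundle with at most a simple pole at x, namely
   p |-> (c / (x1 p0 - x0 p1)) * p  for c in F (defined for p not at x). *)
Definition sect (x : P1rep) (c : F) (p : P1rep) : P1rep :=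
  scl (c / (x.2 * p.1 - x.1 * p.2)) p.

(* L(x) ~ O_S : the pullback O(-1)(x) has a nonzero section which descends
   to S, i.e. whose values at 0, 1, oo correspond to the same element
   lambda of the common fibre under the gluing v_i <-> 1.  (A nonzero
   section of a degree 0 bundle whose pullback is O_{P^1} is nowhere zero.) *)
Definition twist_trivial (a : 'I_3 -> F) (x : P1rep) : Prop :=
  exists c lam : F, c != 0 /\
    forall i : 'I_3, sect x c (special i) = scl lam (scl (a i) (special i)).

(* The locus in (F^x)^3 (the cone over M_O in P^2) of L for which
   some smooth x has L(x) ~ O_S. *)
Definition locus (a : 'I_3 -> F) : Prop :=
  glue_ok a /\ exists x, smooth_pt x /\ twist_trivial a x.

Definition in_closure (p : 'I_3 -> F) : Prop :=
  forall G : {mpoly F[3]}, (forall a, locus a -> G.@[a] = 0) -> G.@[p] = 0.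

Definition nonzero3 (p : 'I_3 -> F) : Prop := exists i, p i != 0.

Definition coordpt (i : 'I_3) : 'I_3 -> F := fun j => (i == j)%:R.

End Model.

(* Main.v *)
Require Import Defs.
From HB Require Import structures.
From mathcomp Require Import all_boot all_order all_algebra.
From mathcomp Require Import mpoly.
From mathcomp Require Import complex.
From mathcomp Require Import ring lra.
Import GRing.Theory Num.Theory.
Local Open Scope ring_scope.

Section S.
Variable R : rcfType.
Local Notation K := (R[i]).

Definition Qp : {mpoly K[3]} := 'X_0*'X_2 - 'X_1*'X_2 - 'X_0*'X_1.

Lemma Qp_eval (p : 'I_3 -> K) : Qp.@[p] = p 0 * p 2 - p 1 * p 2 - p 0 * p 1.
Proof. by rewrite /Qp !(mevalB, mevalM, mevalXU). Qed.

Lemma Qp_homog : Qp \is 2.-homog.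
Proof.
have hX : forall i : 'I_3, ('X_i : {mpoly K[3]}) \is 1.-homog.
  move=> i; rewrite dhomogX; apply/eqP; exact: mdeg1.
by rewrite /Qp !rpredB //; exact: (dhomogM (hX _) (hX _)).
Qed.

Lemma eval_comp (G : {mpoly K[3]}) (F : 'I_3 -> {poly K}) :
  exists g : {poly K}, forall t, g.[t] = G.@[fun i => (F i).[t]].
Proof.
exists (\sum_(m <- msupp G) (G@_m)%:P * \prod_i (F i) ^+ m i) => t.
rewrite mevalE horner_sum; apply: eq_bigr => m _.
by rewrite hornerM hornerC horner_prod; congr (_ * _); apply: eq_bigr => i _; rewrite horner_exp.
Qed.
Lemma curve_vanish (G : {mpoly K[3]}) (F : 'I_3 -> {poly K}) :
  (forall t : K, t != 0 -> t + 1 != 0 -> t - 1 != 0 -> G.@[fun i => (F i).[t]] = 0) ->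
  G.@[fun i => (F i).[0]] = 0.
Proof.
move=> H; have [g Hg] := eval_comp G F.
rewrite -Hg; suff -> : g = 0 by rewrite horner0.
apply: (@roots_geq_poly_eq0 _ g [seq (k.+2)%:R | k <- iota 0 (size g)]).
- apply/allP => t /mapP [k _ ->]; rewrite /root Hg H //.
  + by rewrite pnatr_eq0.
  + by rewrite natr1 pnatr_eq0.
  + by rewrite -natr1 addrK pnatr_eq0.
- rewrite map_inj_uniq ?iota_uniq // => m n /eqP; rewrite eqr_nat => /eqP; by case.
- by rewrite (size_map (fun k : nat => (k.+2)%:R : K)) size_iota.
Qed.
Lemma smooth_prop (x : P1rep K) : smooth_pt x -> [/\ x.1 != 0, x.2 != 0 & x.1 != x.2].
Proof.
case/andP => _ /forallP H.
have := H 0; have := H 1; have := H 2.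
rewrite /samept /special /= !mulr1 !mulr0 => h2 h1 h0.
by split => //; rewrite eq_sym.
Qed.

Lemma twist_of (a : 'I_3 -> K) (x : P1rep K) c lam :
  c / (- x.1) = lam * a 0 -> c / (x.2 - x.1) = lam * a 1 -> c / x.2 = lam * a 2 ->
  forall i, sect x c (special K i) = scl lam (scl (a i) (special K i)).
Proof.
move=> h0 h1 h2 [[|[|[|k]]] Hi] //.
- have -> : Ordinal Hi = 0 by apply: val_inj.
  rewrite /sect /scl /special /= !mulr0 !mulr1 !sub0r h0; congr pair.
- have -> : Ordinal Hi = 1 by apply: val_inj.
  by rewrite /sect /scl /special /= !mulr1 h1.
- have -> : Ordinal Hi = 2 by apply: val_inj.
  by rewrite /sect /scl /special /= !mulr0 !mulr1 subr0 h2.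
Qed.

Lemma eqs_of_twist (a : 'I_3 -> K) (x : P1rep K) c lam :
  (forall i, sect x c (special K i) = scl lam (scl (a i) (special K i))) ->
  [/\ c / (- x.1) = lam * a 0, c / (x.2 - x.1) = lam * a 1 & c / x.2 = lam * a 2].
Proof.
move=> H; have := H 0; have := H 1; have := H 2.
rewrite /sect /scl /special /= !mulr0 !mulr1 !sub0r subr0.
move=> A B C; split; [by case: C | by case: B | by case: A].
Qed.
Definition mk3 (T : Type) (u v w : T) : 'I_3 -> T :=
  fun i => match val i with 0 => u | 1 => v | _ => w end.
Arguments mk3 {T}.

Lemma eq3 (T : Type) (p q : 'I_3 -> T) : p 0 = q 0 -> p 1 = q 1 -> p 2 = q 2 -> p =1 q.
Proof.
move=> h0 h1 h2 [[|[|[|k]]] Hi] //.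
- by have -> : Ordinal Hi = 0 by apply: val_inj.
- by have -> : Ordinal Hi = 1 by apply: val_inj.
- by have -> : Ordinal Hi = 2 by apply: val_inj.
Qed.

Lemma mk3_0 T (u v w : T) : mk3 u v w 0 = u. Proof. by []. Qed.
Lemma mk3_1 T (u v w : T) : mk3 u v w 1 = v. Proof. by []. Qed.
Lemma mk3_2 T (u v w : T) : mk3 u v w 2 = w. Proof. by []. Qed.

Lemma locus_Q (a : 'I_3 -> K) : locus a -> Qp.@[a] = 0.
Proof.
move=> [ha [x [sx [c [lam [c0 H]]]]]].
have [h0 h1 h2] := @eqs_of_twist a x c lam H.
have [x1 x2 x12] := @smooth_prop x sx.
have l0 : lam != 0.
  apply/eqP => l0; move: h2; rewrite l0 mul0r => /eqP.
  by rewrite mulf_eq0 invr_eq0 (negPf c0) (negPf x2).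
have e0 : a 0 = c / (- x.1) / lam by rewrite h0 mulrAC mulfV // mul1r.
have e1 : a 1 = c / (x.2 - x.1) / lam by rewrite h1 mulrAC mulfV // mul1r.
have e2 : a 2 = c / x.2 / lam by rewrite h2 mulrAC mulfV // mul1r.
have x21 : x.2 - x.1 != 0 by rewrite subr_eq0 eq_sym.
rewrite Qp_eval e0 e1 e2; field.
by rewrite x1 x2 x21 l0.
Qed.
Lemma Q_locus (p : 'I_3 -> K) : p 0 != 0 -> p 1 != 0 -> p 2 != 0 ->
  Qp.@[p] = 0 -> locus p.
Proof.
move=> p0 p1 p2; rewrite Qp_eval => h.
have hQ : p 0 * p 2 = p 1 * (p 0 + p 2).
  by apply/eqP; rewrite -subr_eq0 -h; apply/eqP; ring.
have s02 : p 0 + p 2 != 0.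
  apply/eqP => s; move: hQ; rewrite s mulr0 => /eqP.
  by rewrite mulf_eq0 (negPf p0) (negPf p2).
have e1 : p 1 = p 0 * p 2 / (p 0 + p 2).
  by rewrite hQ mulfK.
split; first by move=> [[|[|[|k]]] Hi] //; [have -> : Ordinal Hi = 0 by apply: val_inj
   | have -> : Ordinal Hi = 1 by apply: val_inj | have -> : Ordinal Hi = 2 by apply: val_inj].
exists (- (p 0)^-1, (p 2)^-1); split.
  apply/andP; split; first by rewrite /is_P1rep /= oppr_eq0 invr_eq0 p0.
  apply/forallP => -[[|[|[|k]]] Hi] //; rewrite /samept /special /= ?mulr0 ?mulr1.
  - by rewrite oppr_eq0 invr_eq0.
  - apply/eqP => E.
    have id : p 0 + p 2 = p 0 * p 2 * ((p 2)^-1 + (p 0)^-1) by field; rewrite p0 p2.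
    by move: s02; rewrite id -E addNr mulr0 eqxx.
  - by rewrite eq_sym invr_eq0.
exists 1, 1; split; first exact: oner_neq0.
apply: twist_of => /=.
- rewrite opprK; field; by rewrite p0.
- rewrite e1; field; by rewrite s02 p0 p2.
- field; by rewrite p2.
Qed.
Lemma rel_of (a : 'I_3 -> K) x : smooth_pt x -> twist_trivial a x ->
  a 0 * x.1 = - (a 2 * x.2).
Proof.
move=> sx [c [lam [c0 H]]].
have [h0 h1 h2] := @eqs_of_twist a x c lam H.
have [x1 x2 x12] := @smooth_prop x sx.
have l0 : lam != 0.
  apply/eqP => l0; move: h2; rewrite l0 mul0r => /eqP.
  by rewrite mulf_eq0 invr_eq0 (negPf c0) (negPf x2).
apply/eqP; rewrite -subr_eq0 opprK.
have : lam * (a 0 * x.1 + a 2 * x.2) = 0.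
  rewrite mulrDr !mulrA -h0 -h2; field; by rewrite x1 x2.
by move/eqP; rewrite mulf_eq0 (negPf l0).
Qed.

Lemma uniq_pt (a : 'I_3 -> K) (x y : P1rep K) : glue_ok a ->
  smooth_pt x -> smooth_pt y -> twist_trivial a x -> twist_trivial a y -> samept x y.
Proof.
move=> ga sx sy tx ty.
have ex := @rel_of a x sx tx; have ey := @rel_of a y sy ty.
apply/eqP; apply: (mulfI (ga 0)).
by rewrite mulrA ex mulrCA ey; ring.
Qed.
Lemma mk3_horner (P0 P1 P2 : {poly K}) t :
  (fun i => (mk3 P0 P1 P2 i).[t]) =1 mk3 P0.[t] P1.[t] P2.[t].
Proof. by apply: eq3. Qed.

Lemma curve_case (p : 'I_3 -> K) (P0 P1 P2 : {poly K}) :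
  p =1 mk3 P0.[0] P1.[0] P2.[0] ->
  (forall t : K, t != 0 -> t + 1 != 0 -> t - 1 != 0 ->
     [/\ P0.[t] != 0, P1.[t] != 0, P2.[t] != 0
       & P0.[t] * P2.[t] - P1.[t] * P2.[t] - P0.[t] * P1.[t] = 0]) ->
  in_closure p.
Proof.
move=> hp hc G HG.
rewrite (meval_eq _ hp) -(meval_eq _ (mk3_horner P0 P1 P2 0)).
apply: curve_vanish => t t0 t1 t2.
rewrite (meval_eq _ (mk3_horner P0 P1 P2 t)).
have [n0 n1 n2 q] := hc t t0 t1 t2.
by apply: HG; apply: Q_locus => //; rewrite Qp_eval.
Qed.
Ltac curve_side :=
  let t := fresh "t" in let t0 := fresh "t0" in let t1 := fresh "t1" in
  let t2 := fresh "t2" in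
  move=> t t0 t1 t2; rewrite !(hornerCM, hornerM, hornerD, hornerN, hornerX, hornerC);
  split; [ by rewrite ?mulf_neq0 ?oppr_eq0 // .. | ring ].

Lemma closure_of (p : 'I_3 -> K) : nonzero3 p -> Qp.@[p] = 0 -> in_closure p.
Proof.
move=> nz; rewrite Qp_eval => hq.
have nz' : ~ [/\ p 0 = 0, p 1 = 0 & p 2 = 0].
  by case: nz => j pj [a b c]; move: pj; rewrite (@eq3 _ p (fun _ => 0) a b c j) eqxx.
have [p0|p0] := eqVneq (p 0) 0; have [p1|p1] := eqVneq (p 1) 0;
  have [p2|p2] := eqVneq (p 2) 0.
- by case: nz'.
- apply: (@curve_case p ((p 2)%:P * ('X * ('X + 1%:P))) ((p 2)%:P * 'X) ((p 2)%:P * ('X + 1%:P))).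
    by apply: eq3; rewrite ?mk3_0 ?mk3_1 ?mk3_2 !(hornerCM, hornerM, hornerD, hornerN, hornerX, hornerC) ?p0 ?p1; ring.
  curve_side.
- apply: (@curve_case p ((- p 1)%:P * ('X * ('X - 1%:P))) ((- p 1)%:P * ('X - 1%:P)) ((- p 1)%:P * 'X)).
    by apply: eq3; rewrite ?mk3_0 ?mk3_1 ?mk3_2 !(hornerCM, hornerM, hornerD, hornerN, hornerX, hornerC) ?p0 ?p2; ring.
  curve_side.
- have : p 1 * p 2 = 0 by rewrite -[RHS]oppr0 -hq p0; ring.
  by move/eqP; rewrite mulf_eq0 (negPf p1) (negPf p2).
- apply: (@curve_case p ((p 0)%:P * ('X + 1%:P)) ((p 0)%:P * 'X) ((p 0)%:P * ('X * ('X + 1%:P)))).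
    by apply: eq3; rewrite ?mk3_0 ?mk3_1 ?mk3_2 !(hornerCM, hornerM, hornerD, hornerN, hornerX, hornerC) ?p1 ?p2; ring.
  curve_side.
- have : p 0 * p 2 = 0 by rewrite -hq p1; ring.
  by move/eqP; rewrite mulf_eq0 (negPf p0) (negPf p2).
- have : p 0 * p 1 = 0 by rewrite -[RHS]oppr0 -hq p2; ring.
  by move/eqP; rewrite mulf_eq0 (negPf p0) (negPf p1).
- by move=> G HG; apply: HG; apply: Q_locus => //; rewrite Qp_eval.
Qed.
End S.

Theorem mainTheorem3 (R : rcfType) :
  (* uniqueness of the point x *)
  (forall (a : 'I_3 -> R[i]) (x y : P1rep R[i]), glue_ok a ->
      smooth_pt x -> smooth_pt y -> twist_trivial a x -> twist_trivial a y ->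
      samept x y) /\
  (* Z is a conic through the three coordinate points *)
  exists Q : {mpoly R[i][3]},
    [/\ Q != 0, Q \is 2.-homog,
        (forall p : 'I_3 -> R[i], nonzero3 p -> (in_closure p <-> Q.@[p] = 0))
      & forall j : 'I_3, Q.@[coordpt R[i] j] = 0].
Proof.
split; first by move=> a x y; exact: (@uniq_pt R a x y).
exists (Qp R); split.
- apply/eqP => h.
  have := @Qp_eval R (mk3 R[i] 1 0 1); rewrite h meval0 mk3_0 mk3_1 mk3_2.
  by move/eqP; rewrite ?mulr1 ?mul0r ?mulr0 ?subr0 eq_sym oner_eq0.
- exact: (Qp_homog R).
- move=> p nz; split; first by move=> H; apply: H; exact: (@locus_Q R).
  exact: (@closure_of R p nz).
- move=> j; rewrite (@Qp_eval R) /coordpt.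
  case: j => [[|[|[|k]]] Hj] //=.
  all: ring.
Qed.
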